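(* Let $G=(V,E)$ be a finite simple connected graph with diameter $d$. Suppose there exist integers $n_1,\dots,n_d\ge 1$ with $\sum_{i=1}^d n_i=|V|-1$ such that for every vertex $v\in V$ and every $1\le i\le d$, exactly $n_i$ vertices are at distance $i$ from $v$. Then for any rank assignment $f:V\to\mathbb{R}$ under which all vertices have distinct strings, and any real numbers $k\neq 0$ and $b$, the rank assignment $v\mapsto kf(v)+b$ also gives all vertices distinct strings. Furthermore, if additionally $IDI(G)=2$, then $G$ is an ID-graph.
   Context: For a graph $G=(V,E)$ with diameter $d$, a rank assignment is a function $f:V\to\mathbb{R}$; under $f$, the string of a vertex $v$ is the $d$-vector whose $i$-th coordinate is the sum of $f(w)$ over all vertices $w$ with $d(v,w)=i$. The ID-index $IDI(G)$ is the minimum $k$ such that there exists $f:V\to\mathbb{R}$ with $|f(V)|=k$ under which all vertices have distinct strings. A red-white coloring of $G$ assigns red or white to each vertex with at least one vertex red; the code of a vertex $v$ is the $d$-vector whose $i$-th coordinate is the number of red vertices at distance $i$ from $v$. A red-white coloring in which all vertices have distinct codes is an ID-coloring, and $G$ is an ID-graph if it has an ID-coloring. *)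

(* Defs.v *)
(* A finite simple graph is a symmetric irreflexive relation
   e : rel T on a finType T. *)
From mathcomp Require Import all_boot all_order all_algebra.
From mathcomp Require Import reals.
Set Implicit Arguments. Unset Strict Implicit. Unset Printing Implicit Defensive.
Import Order.TTheory GRing.Theory Num.Theory.
Local Open Scope ring_scope.

Section Graph.
Variables (T : finType) (e : rel T).

Fixpoint ball (k : nat) (x : T) : {set T} :=
  match k with
  | 0 => [set x]
  | k'.+1 => ball k' x :|: [set y | [exists z in ball k' x, e z y]]
  end.

(* graph distance (meaningful for connected graphs: every distance is < #|T|) *)
Definition dist (x y : T) : nat := find (fun k => y \in ball k x) (iota 0 #|T|).

Definition connected_graph : Prop := forall x y : T, connect e x y.

Definition diameter : nat := \max_(p : T * T) dist p.1 p.2.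

(* string of v under rank assignment f: i-th coordinate (i = 1..d) is the sum of
   f over vertices at distance i from v; index j : 'I_d stands for i = j+1 *)
Definition rstring (R : realType) (f : T -> R) (v : T) : {ffun 'I_diameter -> R} :=
  [ffun j : 'I_diameter => \sum_(w | dist v w == j.+1) f w].

Definition distinct_strings (R : realType) (f : T -> R) : Prop :=
  injective (rstring f).

Definition num_ranks (R : realType) (f : T -> R) : nat :=
  size (undup [seq f v | v <- enum T]).

Definition IDI_is (R : realType) (k : nat) : Prop :=
  (exists f : T -> R, distinct_strings f /\ num_ranks f = k) /\
  (forall f : T -> R, distinct_strings f -> (k <= num_ranks f)%N).

(* red-white colouring: c v = true means v is red *)
Definition code (c : T -> bool) (v : T) : {ffun 'I_diameter -> nat} :=
  [ffun j : 'I_diameter => #|[set w | c w & dist v w == j.+1]|].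

Definition ID_coloring (c : T -> bool) : Prop :=
  (exists v, c v) /\ injective (code c).

Definition ID_graph : Prop := exists c : T -> bool, ID_coloring c.

End Graph.

(* Main.v *)
Require Import Defs.
From mathcomp Require Import all_boot all_order all_algebra.
From mathcomp Require Import reals.
Import Order.TTheory GRing.Theory Num.Theory.
Local Open Scope ring_scope.

Lemma sum_card (R : realType) (T : finType) (P : pred T) (x : R) :
  \sum_(w | P w) x = x *+ #|[set w | P w]|.
Proof. by rewrite sumr_const cardsE. Qed.

Theorem mainTheorem4 (R : realType) (T : finType) (e : rel T)
  (e_sym : symmetric e) (e_irr : irreflexive e)
  (Gconn : connected_graph e)
  (Hreg : exists n : 'I_(diameter e) -> nat,
      (forall i, (1 <= n i)%N) /\
      (\sum_(i < diameter e) n i)%N = (#|T| - 1)%N /\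
      (forall (v : T) (i : 'I_(diameter e)),
          #|[set w | dist e v w == i.+1]| = n i)) :
  (forall (f : T -> R), distinct_strings e f ->
     forall k b : R, k != 0 ->
       distinct_strings e (fun v => k * f v + b)) /\
  (IDI_is e R 2 -> ID_graph e).
Proof.
have [n [_ [_ Hn]]] := Hreg.
split.
  move=> f Hf k b k0 u v Huv; apply: Hf; apply/ffunP => j.
  move/ffunP: Huv => /(_ j); rewrite !ffunE !big_split /= -!mulr_sumr.
  rewrite !sum_card !Hn => /addIr; exact: mulfI.
move=> [[f [Hf Hnum]] _].
rewrite /num_ranks in Hnum.
have Hu := undup_uniq [seq f v | v <- enum T].
case Es : (undup _) Hnum Hu => [|a [|c [|]]] // _.
rewrite /= inE andbT => ac.
have mem : forall v, f v \in [:: a; c].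
  by move=> v; rewrite -Es mem_undup; apply: map_f; rewrite mem_enum.
have cin : c \in undup [seq f v | v <- enum T] by rewrite Es !inE eqxx orbT.
rewrite mem_undup in cin; have /mapP [v0 _ Hv0] := cin.
exists (fun v => f v == c); split; first by exists v0; rewrite -Hv0.
have fE : forall w, f w = a + (c - a) * (f w == c)%:R.
  move=> w; have := mem w; rewrite !inE => /orP [] /eqP ->.
    by rewrite (negbTE (ac)) mulr0 addr0.
  by rewrite eqxx mulr1 addrC subrK.
have key : forall v j, rstring e f v j =
   a *+ n j + (c - a) * (code e (fun v => f v == c) v j)%:R.
  move=> v j; rewrite !ffunE (eq_bigr _ (fun w _ => fE w)) big_split /=.
  rewrite sum_card Hn -mulr_sumr; congr (_ + _ * _).
  rewrite (eq_bigr (fun i => if f i == c then 1 else 0)); last by move=> i _; case: (f i == c).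
  rewrite -big_mkcondr /= (eq_bigl (fun w => (f w == c) && (dist e v w == j.+1))); last by move=> w; rewrite andbC.
  by rewrite sum_card.
move=> u v Huv; apply: Hf; apply/ffunP => j.
by rewrite !key Huv.
Qed.
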